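(* Let $p$ be a prime, $n\ge2$, $m_1,\dots,m_n\ge2$, and $\ell_k,r_k\in\mathbb{Z}_p$. Let $\mathbb{E}$ be the splitting field over $\mathbb{Z}_p$ of the polynomials $g_{m_k;\ell_k,r_k}$ mod $p$, $1\le k\le n$. For each $k$ let $U_k\in GL_{m_k}(\mathbb{E})$ be such that $J_k:=U_k^{-1}S_{m_k}(\ell_k,r_k)U_k$ is a canonical (upper triangular) Jordan form over $\mathbb{E}$, and put $U_{T_n}=U_n\otimes U_{n-1}\otimes\cdots\otimes U_1$. Then $U_{T_n}$ is invertible and $$ U_{T_n}^{-1}T_nU_{T_n}=\widetilde J_n,\qquad\text{where }\widetilde J_1=J_1,\ \widetilde J_k=I_{m_k}\otimes\widetilde J_{k-1}+J_k\otimes I_{m_1\cdots m_{k-1}}\ (2\le k\le n), $$ which is an upper triangular (generalized Jordan) matrix. Moreover, $\widetilde J_n$ is a canonical Jordan form if and only if $S_{m_k}(\ell_k,r_k)$ is diagonalizable over $\mathbb{E}$ for every $k\ge2$, and $T_n$ is diagonalizable over $\mathbb{E}$ if and only if $S_{m_k}(\ell_k,r_k)$ is diagonalizable over $\mathbb{E}$ for every $1\le k\le n$.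
   Context: For $k\ge1$ and $t_1,t_2\in\mathbb{Z}_p$, $S_k(t_1,t_2)$ is the $k\times k$ tridiagonal matrix with zeros on the main diagonal, every subdiagonal entry (positions $(i+1,i)$) equal to $t_1$, and every superdiagonal entry (positions $(i,i+1)$) equal to $t_2$. $I_r$ is the $r\times r$ identity, $\otimes$ the Kronecker product. $T_1=S_{m_1}(\ell_1,r_1)$ and $T_k=I_{m_k}\otimes T_{k-1}+S_{m_k}(\ell_k,r_k)\otimes I_{m_1\cdots m_{k-1}}$ for $2\le k\le n$. For $j\ge0$, $g_{j;t_1,t_2}(x)=\sum_{i=0}^{\lfloor j/2\rfloor}(-1)^i(t_1t_2)^i\binom{j-i}{i}x^{j-2i}$ (the characteristic polynomial of $S_j(t_1,t_2)$). A canonical Jordan form is a block diagonal matrix of Jordan blocks, each having a single eigenvalue on its diagonal, $1$'s on its superdiagonal and zeros elsewhere. *)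

(* Defs.v *)
From HB Require Import structures.
From mathcomp Require Import all_boot all_order all_algebra all_field.
Set Implicit Arguments. Unset Strict Implicit. Unset Printing Implicit Defensive.
Import Order.TTheory GRing.Theory Num.Theory.
Local Open Scope ring_scope.

(* Row index i of the result corresponds to the
   pair (i1, i2) = enum_val i of 'I_m1 * 'I_m2 (lexicographic enumeration,
   i.e. i = i1 * m2 + i2, see kron_index_val below), same for columns. *)
Definition kron (R : nzRingType) (m1 n1 m2 n2 : nat)
    (A : 'M[R]_(m1, n1)) (B : 'M[R]_(m2, n2)) : 'M[R]_(m1 * m2, n1 * n2) :=
  \matrix_(i, j)
    (let ik := enum_val (cast_ord (esym (mxvec_cast m1 m2)) i) in
     let jk := enum_val (cast_ord (esym (mxvec_cast n1 n2)) j) in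
     A ik.1 jk.1 * B ik.2 jk.2).

Definition Smx (R : nzRingType) (k : nat) (t1 t2 : R) : 'M[R]_k :=
  \matrix_(i, j) (if i == j.+1 :> nat then t1
                  else if j == i.+1 :> nat then t2 else 0).

Definition gpoly (R : nzRingType) (j : nat) (t1 t2 : R) : {poly R} :=
  \sum_(i < (j./2).+1)
     (((-1) ^+ i * (t1 * t2) ^+ i * ('C(j - i, i))%:R) *: 'X^(j - i.*2)).

(* dimT m j = m_1 * ... * m_(j+1)  (paper indexing m_1, m_2, ...) *)
Fixpoint dimT (m : nat -> nat) (j : nat) : nat :=
  match j with
  | 0 => m 1%N
  | j'.+1 => (m j'.+2 * dimT m j')%N
  end.

(* ksum A j = paper's X_(j+1) where X_1 = A_1,
   X_k = I_(m_k) (x) X_(k-1) + A_k (x) I_(m_1...m_(k-1)). *)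
Fixpoint ksum (R : nzRingType) (m : nat -> nat) (A : forall k, 'M[R]_(m k))
    (j : nat) : 'M[R]_(dimT m j) :=
  match j return 'M[R]_(dimT m j) with
  | 0 => A 1%N
  | j'.+1 => kron (1%:M : 'M[R]_(m j'.+2)) (ksum A j')
             + kron (A j'.+2) (1%:M : 'M[R]_(dimT m j'))
  end.

(* kprod A j = A_(j+1) (x) A_j (x) ... (x) A_1 *)
Fixpoint kprod (R : nzRingType) (m : nat -> nat) (A : forall k, 'M[R]_(m k))
    (j : nat) : 'M[R]_(dimT m j) :=
  match j return 'M[R]_(dimT m j) with
  | 0 => A 1%N
  | j'.+1 => kron (A j'.+2) (kprod A j')
  end.

(* Canonical Jordan form: block diagonal of Jordan blocks, i.e. all entries
   outside the diagonal and superdiagonal vanish, and each superdiagonal entry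
   is either 0 (block boundary) or 1 (inside a block, same eigenvalue). *)
Definition is_jordan_mx (R : nzRingType) (k : nat) (A : 'M[R]_k) : Prop :=
  forall i j : 'I_k,
    ((j != i :> nat) && (j != i.+1 :> nat) -> A i j = 0) /\
    (j = i.+1 :> nat -> A i j = 0 \/ (A i j = 1 /\ A i i = A j j)).

Definition is_upper_trig (R : nzRingType) (k : nat) (A : 'M[R]_k) : Prop :=
  forall i j : 'I_k, (j < i)%N -> A i j = 0.

Lemma kronE (R : nzRingType) m1 n1 m2 n2 (A : 'M[R]_(m1,n1)) (B : 'M[R]_(m2,n2))
  a b c d :
  kron A B (mxvec_index a c) (mxvec_index b d) = A a b * B c d.
Proof. by rewrite mxE /mxvec_index !cast_ordK !enum_rankK. Qed.

(* Main.v *)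
Require Import Defs.
From HB Require Import structures.
From mathcomp Require Import all_boot all_order all_algebra all_field.
From mathcomp Require Import zify.
Import Order.TTheory GRing.Theory Num.Theory.
Local Open Scope ring_scope.
Set Implicit Arguments. Unset Strict Implicit. Unset Printing Implicit Defensive.

Lemma index_allpairs_pair (T1 T2 : eqType) (s : seq T1) (t : seq T2) x y :
  x \in s -> y \in t ->
  index (x, y) [seq (a, b) | a <- s, b <- t] = (index x s * size t + index y t)%N.
Proof.
elim: s => [//|a s IH] xs yt; rewrite allpairs_cons index_cat /=.
have -> : ((x, y) \in [seq (a, b) | b <- t]) = (x == a).
  apply/mapP/eqP => [[b _ [->]]//|->]; by exists y.
case: eqP => [->|/eqP ne]; first by rewrite eqxx index_map //; move=> u v [].
have xs' : x \in s by move: xs; rewrite inE (negbTE ne).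
by rewrite eq_sym (negbTE ne) IH // size_map mulSn addnA.
Qed.

Lemma mxvec_index_val m n (i : 'I_m) (j : 'I_n) :
  (mxvec_index i j : nat) = (i * n + j)%N.
Proof.
rewrite /mxvec_index /= /enum_rank enum_rank_in.unlock insubdK.
  have -> : enum {: 'I_m * 'I_n} = [seq (a, b) | a <- enum 'I_m, b <- enum 'I_n].
    by rewrite enumT unlock.
  by rewrite (@index_allpairs_pair _ _ (enum 'I_m) (enum 'I_n)) ?mem_enum // index_enum_ord size_enum_ord index_enum_ord.
by rewrite cardE [_ \in _]index_mem mem_enum.
Qed.

Section KronR.
Variable R : comNzRingType.

Lemma kron_mul m1 n1 k1 m2 n2 k2 (A : 'M[R]_(m1,n1)) (C : 'M[R]_(n1,k1))
  (B : 'M[R]_(m2,n2)) (D : 'M[R]_(n2,k2)) :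
  kron A B *m kron C D = kron (A *m C) (B *m D).
Proof.
apply/matrixP => i j; case/mxvec_indexP: i => i1 i2; case/mxvec_indexP: j => j1 j2.
rewrite kronE [LHS]mxE.
rewrite (reindex (uncurry (@mxvec_index n1 n2))) /=; last first.
  exact: curry_mxvec_bij.
rewrite !mxE big_distrlr /= pair_big /=; apply: eq_bigr => -[a b] _ /=.
by rewrite !kronE mulrACA.
Qed.

Lemma kron_scalar1 m n : kron (1%:M : 'M[R]_m) (1%:M : 'M[R]_n) = 1%:M.
Proof.
apply/matrixP => i j; case/mxvec_indexP: i => i1 i2; case/mxvec_indexP: j => j1 j2.
rewrite kronE !mxE.
have -> : (mxvec_index i1 i2 == mxvec_index j1 j2) = (i1 == j1) && (i2 == j2).
  apply/eqP/andP => [/(can_inj (cast_ordK _)) /enum_rank_inj [-> ->] //|[/eqP -> /eqP ->] //].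
by case: (i1 == j1); case: (i2 == j2); rewrite /= ?mulr1 ?mulr0 ?mul0r.
Qed.

Lemma kronDl m1 n1 m2 n2 (A B : 'M[R]_(m1,n1)) (C : 'M[R]_(m2,n2)) :
  kron (A + B) C = kron A C + kron B C.
Proof.
apply/matrixP => i j; case/mxvec_indexP: i => i1 i2; case/mxvec_indexP: j => j1 j2.
by rewrite kronE [RHS]mxE ?kronE !mxE mulrDl.
Qed.

Lemma kronDr m1 n1 m2 n2 (A : 'M[R]_(m1,n1)) (B C : 'M[R]_(m2,n2)) :
  kron A (B + C) = kron A B + kron A C.
Proof.
apply/matrixP => i j; case/mxvec_indexP: i => i1 i2; case/mxvec_indexP: j => j1 j2.
by rewrite kronE [RHS]mxE ?kronE !mxE mulrDr.
Qed.

Lemma kronNl m1 n1 m2 n2 (A : 'M[R]_(m1,n1)) (C : 'M[R]_(m2,n2)) :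
  kron (- A) C = - kron A C.
Proof.
apply/matrixP => i j; case/mxvec_indexP: i => i1 i2; case/mxvec_indexP: j => j1 j2.
by rewrite kronE [RHS]mxE ?kronE !mxE mulNr.
Qed.

Lemma kronNr m1 n1 m2 n2 (A : 'M[R]_(m1,n1)) (C : 'M[R]_(m2,n2)) :
  kron A (- C) = - kron A C.
Proof.
apply/matrixP => i j; case/mxvec_indexP: i => i1 i2; case/mxvec_indexP: j => j1 j2.
by rewrite kronE [RHS]mxE ?kronE !mxE mulrN.
Qed.

Lemma kron0l m1 n1 m2 n2 (C : 'M[R]_(m2,n2)) : kron (0 : 'M[R]_(m1,n1)) C = 0.
Proof.
apply/matrixP => i j; case/mxvec_indexP: i => i1 i2; case/mxvec_indexP: j => j1 j2.
by rewrite kronE [RHS]mxE ?kronE !mxE mul0r.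
Qed.

Lemma kron0r m1 n1 m2 n2 (A : 'M[R]_(m1,n1)) : kron A (0 : 'M[R]_(m2,n2)) = 0.
Proof.
apply/matrixP => i j; case/mxvec_indexP: i => i1 i2; case/mxvec_indexP: j => j1 j2.
by rewrite kronE [RHS]mxE ?kronE !mxE mulr0.
Qed.

Lemma kron_scalar_r m n (a : R) (A : 'M[R]_m) :
  kron A (a%:M : 'M[R]_n) = kron (a *: A) 1%:M.
Proof.
apply/matrixP => i j; case/mxvec_indexP: i => i1 i2; case/mxvec_indexP: j => j1 j2.
by rewrite !kronE !mxE -mulr_natr mulrA [A _ _ * _]mulrC.
Qed.

Lemma kronZl m1 n1 m2 n2 (a : R) (A : 'M[R]_(m1,n1)) (C : 'M[R]_(m2,n2)) :
  kron (a *: A) C = a *: kron A C.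
Proof.
apply/matrixP => i j; case/mxvec_indexP: i => i1 i2; case/mxvec_indexP: j => j1 j2.
by rewrite kronE [RHS]mxE kronE mxE mulrA.
Qed.

Lemma kron1_scalar m n (a : R) :
  kron (a%:M : 'M[R]_m) (1%:M : 'M[R]_n) = a%:M.
Proof. by rewrite -[a%:M]scalemx1 kronZl kron_scalar1 scalemx1. Qed.

Lemma map_kron (S : comNzRingType) (f : {rmorphism R -> S}) m1 n1 m2 n2
  (A : 'M[R]_(m1,n1)) (B : 'M[R]_(m2,n2)) :
  map_mx f (kron A B) = kron (map_mx f A) (map_mx f B).
Proof.
apply/matrixP => i j; case/mxvec_indexP: i => i1 i2; case/mxvec_indexP: j => j1 j2.
by rewrite mxE !kronE !mxE rmorphM.
Qed.

End KronR.

Definition ND (F : fieldType) n (M : 'M[F]_n) :=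
  exists r (v : 'M[F]_(r, n)) (c : F),
    v *m (M - c%:M) *m (M - c%:M) = 0 /\ v *m (M - c%:M) != 0.

Section KronSum.
Variable F : fieldType.
Variables p q : nat.
Variables (Y : 'M[F]_p) (X : 'M[F]_q).
Let M := kron (1%:M : 'M[F]_p) X + kron Y (1%:M : 'M[F]_q).

Lemma ksE i1 i2 j1 j2 :
  M (mxvec_index i1 i2) (mxvec_index j1 j2) =
  (i1 == j1)%:R * X i2 j2 + Y i1 j1 * (i2 == j2)%:R.
Proof. by rewrite /M mxE !kronE !mxE. Qed.

Lemma ks_upper : is_upper_trig X -> is_upper_trig Y -> is_upper_trig M.
Proof.
move=> uX uY i j; case/mxvec_indexP: i => i1 i2; case/mxvec_indexP: j => j1 j2.
rewrite !mxvec_index_val ksE => lt.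
have l1 := ltn_ord i2; have l2 := ltn_ord j2.
case: (ltngtP j1 i1) => h.
- have ne : (i1 == j1) = false by apply/eqP => e; move: h; rewrite e ltnn.
  by rewrite ne uY // mul0r mul0r addr0.
- exfalso; nia.
- have e : j1 = i1 by apply: val_inj.
  subst j1; have lt2 : (j2 < i2)%N by nia.
  have ne : (i2 == j2) = false by apply/eqP => e; move: lt2; rewrite e ltnn.
  by rewrite ne uX // mulr0 mulr0 addr0.
Qed.

Lemma ks_diag : is_diag_mx X -> is_diag_mx Y -> is_diag_mx M.
Proof.
move=> /is_diag_mxP dX /is_diag_mxP dY; apply/is_diag_mxP => i j.
case/mxvec_indexP: i => i1 i2; case/mxvec_indexP: j => j1 j2.
rewrite !mxvec_index_val ksE => ne.
case: (eqVneq i1 j1) => [e|n1].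
- subst j1; have n2 : i2 != j2 by apply/eqP => e; move: ne; rewrite e eqxx.
  by rewrite (negbTE n2) dX //= ?mulr1n ?mulr0n ?mul1r ?mulr0 ?addr0.
- by rewrite dY //= ?mulr1n ?mulr0n ?mul0r ?mulr0 ?addr0.
Qed.

Lemma ks_jordan : (1 < q)%N -> (0 < p)%N ->
  is_jordan_mx M <-> is_jordan_mx X /\ is_diag_mx Y.
Proof.
move=> q1 p0; split.
- move=> jM; split.
  + move=> i2 j2; pose o := Ordinal p0.
    have [c1 c2] := jM (mxvec_index o i2) (mxvec_index o j2).
    rewrite !mxvec_index_val !ksE eqxx mul1r in c1 c2; split.
    * move=> /andP[h1 h2].
      have ne : (i2 == j2) = false by apply/eqP => e; move: h1; rewrite e eqxx.
      move: (c1 (ltac:(apply/andP; split; lia))); by rewrite ne mulr0 addr0.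
    * move=> h.
      have ne : (i2 == j2) = false by apply/eqP => e; move: h; rewrite e; lia.
      rewrite ne mulr0 addr0 in c2; have [->|[-> e]] := c2 (ltac:(lia)); first by left.
      right; split => //; move: e; rewrite !eqxx !mul1r !mulr1; exact: addIr.
  + apply/is_diag_mxP => i1 j1 ne; pose z := Ordinal (ltnW q1).
    have [c1 _] := jM (mxvec_index i1 z) (mxvec_index j1 z).
    rewrite !mxvec_index_val ksE in c1.
    have ne' : (i1 == j1) = false by apply/eqP => e; move: ne; rewrite e eqxx.
    have : (j1 * q + z != i1 * q + z)%N && (j1 * q + z != (i1 * q + z).+1)%N.
      apply/andP; split; first nia.
      rewrite /= !addn0; apply/eqP => e.
      have : (i1 < j1)%N by nia.
      move=> lt; nia.
    by move/c1; rewrite ne' mul0r add0r eqxx mulr1.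
- move=> [jX /is_diag_mxP dY] i j.
  case/mxvec_indexP: i => i1 i2; case/mxvec_indexP: j => j1 j2.
  rewrite !mxvec_index_val !ksE.
  have l1 := ltn_ord i2; have l2 := ltn_ord j2.
  case: (eqVneq i1 j1) => [e|n1]; last first.
    rewrite dY; last exact: n1.
    by rewrite mul0r mul0r addr0; split => // _; left.
  subst j1; rewrite eqxx mul1r; have [c1 c2] := jX i2 j2; split.
  + move=> /andP[h1 h2].
    have ne : (i2 == j2) = false by apply/eqP => e; move: h1; rewrite e eqxx.
    by rewrite ne mulr0 addr0 c1 //; apply/andP; split; lia.
  + move=> h.
    have ne : (i2 == j2) = false by apply/eqP => e; move: h; rewrite e; lia.
    rewrite ne mulr0 addr0.
    have [->|[-> e]] := c2 (ltac:(lia)); first by left.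
    by right; split => //; rewrite !eqxx e.
Qed.

End KronSum.

Section FieldLemmas.
Variable F : fieldType.

Lemma mx_neq0 m n (A : 'M[F]_(m, n)) : A != 0 -> exists i j, A i j != 0.
Proof.
move=> /eqP nz.
case: (pickP (fun ij : 'I_m * 'I_n => A ij.1 ij.2 != 0)) => [[i j] h|h].
  by exists i, j.
case: nz; apply/matrixP => i j; rewrite mxE; apply/eqP.
by move: (h (i, j)) => /= /negbFE.
Qed.

Lemma kron_neq0 m1 n1 m2 n2 (A : 'M[F]_(m1,n1)) (B : 'M[F]_(m2,n2)) :
  A != 0 -> B != 0 -> kron A B != 0.
Proof.
move=> /mx_neq0 [i1 [j1 h1]] /mx_neq0 [i2 [j2 h2]].
apply/eqP => e; have := kronE A B i1 j1 i2 j2; rewrite e mxE => /esym/eqP.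
by rewrite mulf_eq0 (negbTE h1) (negbTE h2).
Qed.

Lemma upper_lasteig n (A : 'M[F]_n) (o : 'I_n) :
  is_upper_trig A -> (forall j : 'I_n, (j <= o)%N) ->
  delta_mx (0 : 'I_1) o *m A = A o o *: delta_mx (0 : 'I_1) o.
Proof.
move=> uA omax; rewrite -rowE; apply/rowP => j; rewrite !mxE.
case: (eqVneq j o) => [->|ne]; first by rewrite eqxx mulr1.
rewrite uA ?mulr0 //.
have := omax j; move: ne; rewrite -val_eqE /= => ne; lia.
Qed.

Lemma ks_split p q (Y : 'M[F]_p) (X : 'M[F]_q) a c :
  kron (1%:M : 'M[F]_p) X + kron Y (1%:M : 'M[F]_q) - (a + c)%:M =
  kron (1%:M : 'M[F]_p) (X - c%:M) + kron (Y - a%:M) (1%:M : 'M[F]_q).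
Proof.
rewrite kronDr kronDl kronNr kronNl [kron 1%:M c%:M]kron_scalar_r scalemx1 !kron1_scalar.
by rewrite raddfD /= opprD [- a%:M + _]addrC addrACA.
Qed.

Lemma ND_ks_r p q (Y : 'M[F]_p) (X : 'M[F]_q) :
  ND X -> is_upper_trig Y -> (0 < p)%N ->
  ND (kron (1%:M : 'M[F]_p) X + kron Y (1%:M : 'M[F]_q)).
Proof.
move=> [r [v [c [h0 h1]]]] uY p0.
have o_lt : (p.-1 < p)%N by rewrite ltn_predL.
pose o := Ordinal o_lt; pose e := (delta_mx (0 : 'I_1) o : 'rV[F]_p).
have eY : e *m Y = Y o o *: e.
  by apply: upper_lasteig => // j; rewrite /o /=; have := ltn_ord j; lia.
exists (1 * r)%N, (kron e v), (Y o o + c); rewrite ks_split.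
have key w : kron e w *m (kron (1%:M : 'M[F]_p) (X - c%:M) + kron (Y - (Y o o)%:M) 1%:M)
   = kron e (w *m (X - c%:M)).
  by rewrite mulmxDr !kron_mul mulmx1 (mulmxBr e) eY mul_mx_scalar subrr kron0l addr0.
rewrite key key h0 kron0r; split => //.
apply: kron_neq0 => //; apply/eqP => /matrixP /(_ 0 o); rewrite !mxE !eqxx /=.
by move/eqP; rewrite oner_eq0.
Qed.

Lemma ND_ks_l p q (Y : 'M[F]_p) (X : 'M[F]_q) :
  ND Y -> is_upper_trig X -> (0 < q)%N ->
  ND (kron (1%:M : 'M[F]_p) X + kron Y (1%:M : 'M[F]_q)).
Proof.
move=> [r [v [c [h0 h1]]]] uX q0.
have o_lt : (q.-1 < q)%N by rewrite ltn_predL.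
pose o := Ordinal o_lt; pose e := (delta_mx (0 : 'I_1) o : 'rV[F]_q).
have eX : e *m X = X o o *: e.
  by apply: upper_lasteig => // j; rewrite /o /=; have := ltn_ord j; lia.
exists (r * 1)%N, (kron v e), (c + X o o); rewrite ks_split.
have key w : kron w e *m (kron (1%:M : 'M[F]_p) (X - (X o o)%:M) + kron (Y - c%:M) 1%:M)
   = kron (w *m (Y - c%:M)) e.
  by rewrite mulmxDr !kron_mul !mulmx1 (mulmxBr e) eX mul_mx_scalar subrr kron0r add0r.
rewrite key key h0 kron0l; split => //.
apply: kron_neq0 => //; apply/eqP => /matrixP /(_ 0 o); rewrite !mxE !eqxx /=.
by move/eqP; rewrite oner_eq0.
Qed.

End FieldLemmas.

Section Diag.
Variable F : fieldType.

Lemma mul_diagE m n (w : 'M[F]_(m, n)) (G : 'M[F]_n) i j :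
  (forall a b : 'I_n, a != b :> nat -> G a b = 0) ->
  (w *m G) i j = w i j * G j j.
Proof.
move=> dG; rewrite mxE (bigD1 j) //= big1 ?addr0 // => k nk.
by rewrite dG ?mulr0.
Qed.

Lemma diagonalizable_notND n (A : 'M[F]_n) : diagonalizable A -> ~ ND A.
Proof.
move=> [P Pu /(diagonalizable_forP _ Pu) dD] [r [v [c [h0 h1]]]].
set B := A - c%:M in h0 h1.
pose G := P *m B *m invmx P.
have dG : forall a b : 'I_n, a != b :> nat -> G a b = 0.
  move=> a b ne; rewrite /G /B mulmxBr mulmxBl mul_mx_scalar -scalemxAl mulmxV //.
  by rewrite scalemx1 mxE dD // !mxE (_ : (a == b) = false) ?mulr0n ?oppr0 ?subr0 ?addr0 //; by apply/eqP => e; move: ne; rewrite e eqxx.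
have eB : B = invmx P *m G *m P.
  by rewrite /G !mulmxA mulVmx // mul1mx -mulmxA mulVmx // mulmx1.
clearbody G.
pose w := v *m invmx P.
have hw : w *m G *m G = 0.
  have : v *m B *m B *m invmx P = 0 by rewrite h0 mul0mx.
  by rewrite eB !mulmxA !mulmxK.
have hw1 : w *m G = 0.
  apply/matrixP => i j; move/matrixP: hw => /(_ i j).
  rewrite (mul_diagE (w *m G) i j dG) (mul_diagE w i j dG) !mxE => /eqP.
  by rewrite mulf_eq0 => /orP[/eqP //|/eqP ->]; rewrite mulr0.
move/negP: h1; apply; apply/eqP.
by rewrite eB !mulmxA -/w hw1 mul0mx.
Qed.

Lemma diag_diagonalizable n (A : 'M[F]_n) : is_diag_mx A -> diagonalizable A.
Proof.
move=> dA; exists 1%:M; first exact: unitmx1.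
apply/(diagonalizable_forP _ (unitmx1 _ _)).
by rewrite invmx1 mul1mx mulmx1; apply/is_diag_mxP.
Qed.

Lemma invmx_right n (A B : 'M[F]_n) : A *m B = 1%:M -> invmx A = B.
Proof.
move=> h; have [Au _] := mulmx1_unit h.
by rewrite -[LHS]mulmx1 -h mulmxA mulVmx // mul1mx.
Qed.

Lemma diagonalizable_conj n (A P : 'M[F]_n) : P \in unitmx ->
  diagonalizable A -> diagonalizable (invmx P *m A *m P).
Proof.
move=> Pu [Q Qu /(diagonalizable_forP _ Qu) dD].
have QPu : Q *m P \in unitmx by rewrite unitmx_mul Qu Pu.
exists (Q *m P) => //; apply/(diagonalizable_forP _ QPu) => i j ne.
have -> : invmx (Q *m P) = invmx P *m invmx Q.
  by apply: invmx_right; rewrite !mulmxA mulmxK // mulmxV.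
by rewrite !mulmxA !mulmxK //; exact: dD.
Qed.

Lemma diagonalizable_conjE n (A P : 'M[F]_n) : P \in unitmx ->
  diagonalizable (invmx P *m A *m P) <-> diagonalizable A.
Proof.
move=> Pu; split; last exact: diagonalizable_conj.
have iPu : invmx P \in unitmx by rewrite unitmx_inv.
move=> /(diagonalizable_conj iPu).
by rewrite invmxK !mulmxA mulmxV // mul1mx mulmxK.
Qed.

Lemma jordan_upper n (A : 'M[F]_n) : is_jordan_mx A -> is_upper_trig A.
Proof.
move=> jA i j lt; have [c1 _] := jA i j; apply: c1.
apply/andP; split; apply/eqP => e; move: lt; rewrite e; lia.
Qed.

Lemma jordan_ND n (A : 'M[F]_n) : is_jordan_mx A -> ~~ is_diag_mx A -> ND A.
Proof.
move=> jA nd.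
pose P (i : 'I_n) := [exists j : 'I_n, (j == i.+1 :> nat) && (A i j == 1)].
have [i0 Pi0] : exists i, P i.
  case: (pickP (fun ij : 'I_n * 'I_n => (ij.1 != ij.2 :> nat) && (A ij.1 ij.2 != 0))).
    move=> [i j] /andP [/= ne nz]; exists i; apply/existsP; exists j.
    have [c1 c2] := jA i j.
    have ji : j = i.+1 :> nat.
      case: (eqVneq (j : nat) i.+1) => // nj; move/eqP: nz; case; apply: c1.
      by rewrite nj andbT eq_sym.
    rewrite ji eqxx /=; have [/eqP|[-> _]] := c2 ji; first by rewrite (negbTE nz).
    by [].
  move=> none; move/negP: nd; case; apply/is_diag_mxP => i j ne.
  by move: (none (i, j)) => /=; rewrite ne /= => /negbFE/eqP.
case: (@arg_maxnP _ i0 P (fun i => nat_of_ord i) Pi0) => k /existsP [j /andP [/eqP jk /eqP Akj]] kmax.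
have [_ c2] := jA k j.
have Adiag : A k k = A j j.
  by have [e|[_ ->]] := c2 jk => //; move: (oner_eq0 F); rewrite -Akj e eqxx.
exists 1%N, (delta_mx (0 : 'I_1) k), (A k k).
have r1 : delta_mx (0 : 'I_1) k *m (A - (A k k)%:M) = delta_mx (0 : 'I_1) j.
  rewrite -rowE; apply/rowP => t; rewrite !mxE.
  case: (eqVneq t k) => [->|ntk].
    rewrite eqxx mulr1n subrr /=; case: (eqVneq k j) => // e.
    by move: jk; rewrite e; lia.
  rewrite mulr0n subr0 /=.
  case: (eqVneq t j) => [->|ntj]; first by rewrite Akj.
  have [c1 _] := jA k t; rewrite c1 //; apply/andP; split.
    by move: ntk; rewrite -val_eqE.
  by rewrite -jk; move: ntj; rewrite -val_eqE.
rewrite r1; split; last first.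
  apply/eqP => /matrixP /(_ 0 j); rewrite !mxE !eqxx /= => /eqP.
  by rewrite oner_eq0.
rewrite -rowE; apply/rowP => t; rewrite !mxE.
case: (eqVneq t j) => [->|ntj]; first by rewrite mulr1n Adiag subrr.
rewrite mulr0n subr0.
have [c1 c2'] := jA j t.
case: (eqVneq (t : nat) j.+1) => [e|ne].
  have [//|[h _]] := c2' e.
  have Pj : P j by apply/existsP; exists t; rewrite e h !eqxx.
  by move: (kmax j Pj); rewrite jk; lia.
apply: c1; rewrite ne andbT; by move: ntj; rewrite -val_eqE.
Qed.

End Diag.

Lemma kron_unit_inv (F : fieldType) p q (P : 'M[F]_p) (Q : 'M[F]_q) :
  P \in unitmx -> Q \in unitmx ->
  kron P Q \in unitmx /\ invmx (kron P Q) = kron (invmx P) (invmx Q).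
Proof.
move=> Pu Qu.
have h : kron P Q *m kron (invmx P) (invmx Q) = 1%:M.
  by rewrite kron_mul !mulmxV // kron_scalar1.
by split; [exact: (mulmx1_unit h).1 | exact: invmx_right h].
Qed.

Section Tensor.
Variables (R : comNzRingType) (F : fieldType) (f : {rmorphism R -> F}) (m : nat -> nat).

Lemma kprod_sim (S : forall k, 'M[R]_(m k)) (U : forall k, 'M[F]_(m k)) j :
  (forall k, (1 <= k <= j.+1)%N -> U k \in unitmx) ->
  kprod U j \in unitmx /\
  invmx (kprod U j) *m map_mx f (ksum S j) *m kprod U j
    = ksum (fun k => invmx (U k) *m map_mx f (S k) *m U k) j.
Proof.
elim: j => [|j IH] hU /=; first by split => //; apply: hU.
have [u1 e1] := IH (fun k hk => hU k (ltac:(lia))).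
have u2 := hU j.+2 (ltac:(lia)).
have [u e] := kron_unit_inv u2 u1.
split => //.
rewrite e map_mxD !map_kron !map_scalar_mx rmorph1 mulmxDr mulmxDl !kron_mul.
by rewrite !mulmx1 !mulVmx // e1.
Qed.

Variable J : forall k, 'M[F]_(m k).

Lemma dimT_gt1 j : (forall k, (1 <= k <= j.+1)%N -> (2 <= m k)%N) -> (1 < dimT m j)%N.
Proof.
elim: j => [|j IH] hm /=; first exact: hm.
have := IH (fun k hk => hm k (ltac:(lia))); have := hm j.+2 (ltac:(lia)); nia.
Qed.

Lemma ksum_upper j : (forall k, (1 <= k <= j.+1)%N -> is_upper_trig (J k)) ->
  is_upper_trig (ksum J j).
Proof.
elim: j => [|j IH] hu /=; first exact: hu.
apply: ks_upper; [apply: IH => k hk|]; apply: hu; lia.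
Qed.

Lemma ksum_diag j : (forall k, (1 <= k <= j.+1)%N -> is_diag_mx (J k)) ->
  is_diag_mx (ksum J j).
Proof.
elim: j => [|j IH] hd /=; first exact: hd.
apply: ks_diag; [apply: IH => k hk|]; apply: hd; lia.
Qed.

Lemma ksum_jordan j : (forall k, (1 <= k <= j.+1)%N -> (2 <= m k)%N) ->
  is_jordan_mx (J 1%N) ->
  (is_jordan_mx (ksum J j) <-> forall k, (2 <= k <= j.+1)%N -> is_diag_mx (J k)).
Proof.
move=> hm j1; elim: j hm => [|j IH] hm /=.
  by split => // _ k hk; exfalso; lia.
have q1 := dimT_gt1 (j:=j) (fun k hk => hm k (ltac:(lia))).
have p0 : (0 < m j.+2)%N by have := hm j.+2 (ltac:(lia)); lia.
rewrite ks_jordan // IH; last by move=> k hk; apply: hm; lia.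
split.
  move=> [h1 h2] k hk; case: (ltnP k j.+2) => hk2; first by apply: h1; lia.
  by have -> : k = j.+2 by lia.
by move=> h; split; [move=> k hk|]; apply: h; lia.
Qed.

Lemma ksum_ND j : (forall k, (1 <= k <= j.+1)%N -> (2 <= m k)%N) ->
  (forall k, (1 <= k <= j.+1)%N -> is_upper_trig (J k)) ->
  forall k, (1 <= k <= j.+1)%N -> ND (J k) -> ND (ksum J j).
Proof.
elim: j => [|j IH] hm hu k hk nd /=.
  have e : k = 1%N by lia.
  by move: nd; rewrite e.
have q0 : (0 < dimT m j)%N.
  by have := dimT_gt1 (j:=j) (fun k hk => hm k (ltac:(lia))); lia.
have p0 : (0 < m j.+2)%N by have := hm j.+2 (ltac:(lia)); lia.
case: (ltnP k j.+2) => hk2.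
  apply: ND_ks_r => //; last by apply: hu; lia.
  apply: (IH _ _ k) => //; try lia; move=> k' hk'; [apply: hm | apply: hu]; lia.
have e : k = j.+2 by lia.
subst k; apply: ND_ks_l => //; apply: ksum_upper => k' hk'; apply: hu; lia.
Qed.

End Tensor.

Theorem theorem5p3 (p n : nat) (m : nat -> nat) (l r : nat -> 'F_p)
    (E : fieldExtType 'F_p) (U : forall k, 'M[E]_(m k)) :
  prime p -> (2 <= n)%N -> (forall k, (1 <= k <= n)%N -> (2 <= m k)%N) ->
  splittingFieldFor 1%VS
    (map_poly (in_alg E) (\prod_(1 <= k < n.+1) gpoly (m k) (l k) (r k)))
    fullv ->
  (forall k, (1 <= k <= n)%N ->
     U k \in unitmx /\
     is_jordan_mx (invmx (U k) *m map_mx (in_alg E) (Smx (m k) (l k) (r k)) *m U k)) ->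
  let SE := fun k => map_mx (in_alg E) (Smx (m k) (l k) (r k)) in
  let J := fun k => invmx (U k) *m SE k *m U k in
  let UT := kprod U n.-1 in
  let Tn := map_mx (in_alg E) (ksum (fun k => Smx (m k) (l k) (r k)) n.-1) in
  let Jt := ksum J n.-1 in
  [/\ UT \in unitmx,
      invmx UT *m Tn *m UT = Jt,
      is_upper_trig Jt,
      is_jordan_mx Jt <-> (forall k, (2 <= k <= n)%N -> diagonalizable (SE k))
    & diagonalizable Tn <-> (forall k, (1 <= k <= n)%N -> diagonalizable (SE k))].
Proof.
move=> pp n2 hm _ hUJ SE J UT Tn Jt.
have nE : n.-1.+1 = n by lia.
have hm' : forall k, (1 <= k <= n.-1.+1)%N -> (2 <= m k)%N.
  by move=> k; rewrite nE; apply: hm.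
have hU : forall k, (1 <= k <= n.-1.+1)%N -> U k \in unitmx.
  by move=> k; rewrite nE => hk; exact: (hUJ k hk).1.
have hJ : forall k, (1 <= k <= n.-1.+1)%N -> is_jordan_mx (J k).
  by move=> k; rewrite nE => hk; exact: (hUJ k hk).2.
have hu : forall k, (1 <= k <= n.-1.+1)%N -> is_upper_trig (J k).
  by move=> k hk; apply: jordan_upper; apply: hJ.
have [UTu eT0] := kprod_sim (in_alg E) (fun k => Smx (m k) (l k) (r k)) hU.
have eT : invmx UT *m Tn *m UT = Jt := eT0.
have diagJ : forall k, (1 <= k <= n.-1.+1)%N ->
    is_diag_mx (J k) <-> diagonalizable (SE k).
  move=> k hk; split.
    move/diag_diagonalizable => dJ; exact: (proj1 (diagonalizable_conjE _ (hU k hk)) dJ).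
  move=> /(diagonalizable_conj (hU k hk)) dJ.
  case: (boolP (is_diag_mx (J k))) => // nd; exfalso.
  exact: (diagonalizable_notND dJ (jordan_ND (hJ k hk) nd)).
split => //.
- exact: ksum_upper.
- rewrite ksum_jordan //; last by apply: hJ; lia.
  split=> h k hk; [apply/diagJ|apply/diagJ]; try lia; apply: h; lia.
- have dT : diagonalizable Tn <-> diagonalizable Jt.
    rewrite -eT; split => h; first exact: diagonalizable_conj.
    exact: (proj1 (diagonalizable_conjE _ UTu) h).
  rewrite dT; split.
    move=> dJt k hk; apply/diagJ; first lia.
    case: (boolP (is_diag_mx (J k))) => // nd; exfalso.
    apply: (diagonalizable_notND dJt).
    apply: (ksum_ND hm' hu (k := k)); first lia.
    exact: (jordan_ND (hJ k (ltac:(lia))) nd).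
  move=> h; apply: diag_diagonalizable; apply: ksum_diag => k hk.
  apply/diagJ => //; apply: h; lia.
Qed.
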